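(* Let $\mathbf{k}$ be a field, $Q$ a finite connected quiver, $\Lambda=\mathbf{k}Q/\mathcal{J}^2$ ($\mathcal{J}$ the arrow ideal), $n\ge2$, and assume $\mathcal{C}\subseteq\operatorname{mod}\Lambda$ is an $n$-cluster tilting subcategory. Then every vertex $v\in Q_0$ satisfies $\delta^-(v)\le2$ and $\delta^+(v)\le2$.
   Context: Modules are finite-dimensional right modules. $\mathcal{C}$ is $n$-cluster tilting if it is functorially finite and $\mathcal{C}=\{X\mid \operatorname{Ext}^i(X,\mathcal{C})=0\ \forall 0<i<n\}=\{X\mid\operatorname{Ext}^i(\mathcal{C},X)=0\ \forall 0<i<n\}$. $\delta^-(v)$ and $\delta^+(v)$ are the numbers of arrows ending, resp. starting, at $v$. *)

(* Defs.v *)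
From mathcomp Require Import all_boot all_order all_algebra.
Set Implicit Arguments. Unset Strict Implicit. Unset Printing Implicit Defensive.
Import GRing.Theory.
Local Open Scope ring_scope.

(* Finite-dimensional modules over Lambda = kQ/J^2 are encoded as
   representations of Q satisfying the relations J^2 = 0
   (row-vector convention: the map of arrow a acts by x |-> x *m M). *)
Section RadSqZero.
Variables (k : fieldType) (V E : finType) (s t : E -> V).

(* rarr a u v is the matrix of arrow a; it is forced to be 0 unless
   (u,v) = (s a, t a), which avoids dependent-type casts. *)
Record rep := Rep {
  rdim : V -> nat;
  rarr : E -> forall u v : V, 'M[k]_(rdim u, rdim v);
  rarr_supp : forall a u v, (u, v) != (s a, t a) -> rarr a u v = 0;
  rarr_rel : forall a b u v w, rarr a u v *m rarr b v w = 0
}.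

Record hom (M N : rep) := Hom {
  hmap : forall v : V, 'M[k]_(rdim M v, rdim N v);
  hcomm : forall a u v, rarr M a u v *m hmap v = hmap u *m rarr N a u v
}.

Definition hcompE (M N P : rep) (f : hom M N) (g : hom N P) (v : V) :
  'M[k]_(rdim M v, rdim P v) := hmap f v *m hmap g v.

Definition hom_eq (M N : rep) (f g : hom M N) := forall v, hmap f v = hmap g v.

Definition hom_zero (M N : rep) (f : hom M N) := forall v, hmap f v = 0.

Definition surj (M N : rep) (f : hom M N) := forall v, row_full (hmap f v).

Definition exact_at (L M N : rep) (f : hom L M) (g : hom M N) :=
  forall v, hmap f v *m hmap g v = 0 /\ (kermx (hmap g v) <= hmap f v)%MS.

Definition projective (P : rep) :=
  forall (M N : rep) (g : hom M N) (f : hom P N), surj g ->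
    exists h : hom P M, forall v, hcompE h g v = hmap f v.

Definition proj_resolution (X : rep) (P : nat -> rep)
  (d : forall j, hom (P j.+1) (P j)) (eps : hom (P 0%N) X) :=
  [/\ forall j, projective (P j), surj eps, exact_at (d 0%N) eps
    & forall j, exact_at (d j.+1) (d j)].

(* Ext^(j+1)(X, Y) = 0 : computed from a projective resolution of X as the
   cohomology of Hom(P_*, Y) in degree j+1 (every cocycle is a coboundary). *)
Definition Ext_vanish (i : nat) (X Y : rep) :=
  match i with
  | 0%N => False
  | j.+1 =>
    exists (P : nat -> rep) (d : forall j, hom (P j.+1) (P j)) (eps : hom (P 0%N) X),
      proj_resolution d eps /\
      forall f : hom (P j.+1) Y,
        (forall v, hcompE (d j.+1) f v = 0) ->
        exists g : hom (P j) Y, forall v, hmap f v = hcompE (d j) g v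
  end.

Definition functorially_finite (C : rep -> Prop) :=
  (forall M, exists (C0 : rep) (f : hom C0 M), C C0 /\
     forall (C1 : rep) (g : hom C1 M), C C1 ->
       exists h : hom C1 C0, forall v, hmap g v = hcompE h f v) /\
  (forall M, exists (C0 : rep) (f : hom M C0), C C0 /\
     forall (C1 : rep) (g : hom M C1), C C1 ->
       exists h : hom C0 C1, forall v, hmap g v = hcompE f h v).

Definition n_cluster_tilting (n : nat) (C : rep -> Prop) :=
  [/\ functorially_finite C,
      (forall X, C X <-> forall Y, C Y -> forall i, (0 < i < n)%N -> Ext_vanish i X Y)
    & (forall X, C X <-> forall Y, C Y -> forall i, (0 < i < n)%N -> Ext_vanish i Y X)].

End RadSqZero.

Definition quiver_connected (V E : finType) (s t : E -> V) :=
  forall u w : V,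
    connect (fun x y => [exists a, ((s a == x) && (t a == y)) || ((s a == y) && (t a == x))]) u w.

Definition indeg (V E : finType) (t : E -> V) (v : V) := #|[set a | t a == v]|.
Definition outdeg (V E : finType) (s : E -> V) (v : V) := #|[set a | s a == v]|.

(* Main.v *)
Require Import Defs.
From mathcomp Require Import all_boot all_order all_algebra.
Set Implicit Arguments. Unset Strict Implicit. Unset Printing Implicit Defensive.
Import GRing.Theory.
Local Open Scope ring_scope.

Section Aux.
Variable (k : fieldType).

Lemma sum_ev_in (T : finType) (A : {set T}) (o : T) (F : 'I_#|A| -> k) l0 :
  enum_val l0 = o -> \sum_l (enum_val l == o)%:R * F l = F l0.
Proof.
move=> H; rewrite (bigD1 l0) //= H eqxx mul1r big1 ?addr0 // => l nl.
case: eqP => [E|_]; last by rewrite mul0r.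
by case/eqP: nl; apply: enum_val_inj; rewrite E H.
Qed.

Lemma sum_ev_out (T : finType) (A : {set T}) (o : T) (F : 'I_#|A| -> k) :
  o \notin A -> \sum_l (enum_val l == o)%:R * F l = 0.
Proof.
move=> H; rewrite big1 // => l _; case: eqP => [E|_]; last by rewrite mul0r.
by move: (enum_valP l); rewrite E (negbTE H).
Qed.

Lemma solve_ker m n p (A : 'M[k]_(m, n)) (B : 'M[k]_(m, p)) :
  kermx A *m B = 0 -> A *m (pinvmx A *m B) = B.
Proof.
move=> HB; apply/eqP; rewrite -subr_eq0 mulmxA -{2}(mul1mx B) -mulmxBl.
have: (A *m pinvmx A - 1%:M <= kermx A)%MS.
  by apply/sub_kermxP; rewrite mulmxBl mul1mx mulmxKpV ?subrr.
by case/submxP=> D ->; rewrite -mulmxA HB mulmx0.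
Qed.

Lemma full_cancel m n p (A : 'M[k]_(m, n)) (B1 B2 : 'M[k]_(n, p)) :
  row_full A -> A *m B1 = A *m B2 -> B1 = B2.
Proof.
move=> HA HB; have H1: (1%:M *m pinvmx A *m A = 1%:M :> 'M_n).
  by apply: mulmxKpV; rewrite sub1mx.
by rewrite -(mul1mx B1) -(mul1mx B2) -H1 mul1mx -!mulmxA HB.
Qed.
End Aux.

Section Quiv.
Variables (k : fieldType) (V E : finType) (s t : E -> V).
Notation Rp := (rep k s t).

Definition zrep : Rp.
Proof.
refine (@Rep k V E s t (fun _ => 0%N) (fun _ _ _ => 0) _ _).
- by [].
- by move=> *; rewrite mul0mx.
Defined.

Definition zhom (M N : Rp) : Defs.hom M N.
Proof. refine (@Defs.Hom k V E s t M N (fun _ => 0) _); by move=> *; rewrite mulmx0 mul0mx. Defined.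

Definition idhom (M : Rp) : Defs.hom M M.
Proof. refine (@Defs.Hom k V E s t M M (fun _ => 1%:M) _); by move=> *; rewrite mulmx1 mul1mx. Defined.

Lemma zrep_proj : projective zrep.
Proof. by move=> M N g f _; exists (zhom zrep M) => v; rewrite !flatmx0. Qed.

Definition Pset (x u : V) : {set option E} :=
  [set o | match o with None => u == x | Some a => (s a == x) && (t a == u) end].
Definition Iset (w u : V) : {set option E} :=
  [set o | match o with None => u == w | Some a => (s a == u) && (t a == w) end].

Definition Parr x (c : E) (u u' : V) : 'M[k]_(#|Pset x u|, #|Pset x u'|) :=
  \matrix_(i, j) ((enum_val i == None)%:R * (enum_val j == Some c)%:R).
Definition Iarr w (c : E) (u u' : V) : 'M[k]_(#|Iset w u|, #|Iset w u'|) :=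
  \matrix_(i, j) ((enum_val i == Some c)%:R * (enum_val j == None)%:R).

Lemma inP x u o : (o \in Pset x u) = match o with None => u == x | Some a => (s a == x) && (t a == u) end.
Proof. by rewrite inE. Qed.
Lemma inI w u o : (o \in Iset w u) = match o with None => u == w | Some a => (s a == u) && (t a == w) end.
Proof. by rewrite inE. Qed.

Definition Prep (x : V) : Rp.
Proof.
refine (@Rep k V E s t (fun u => #|Pset x u|) (Parr x) _ _).
- move=> c u u' H; apply/matrixP=> i j; rewrite !mxE.
  case: eqP => Ei; last by rewrite mul0r.
  case: eqP => Ej; last by rewrite mulr0.
  move: (enum_valP i) (enum_valP j); rewrite Ei Ej !inP => /eqP eu /andP[/eqP e1 /eqP e2].
  by move: H; rewrite eu e2 -e1 eqxx.
- move=> a b u v w; apply/matrixP=> i j; rewrite !mxE big1 // => l _; rewrite !mxE.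
  by case: (enum_val l) => [c|] /=; rewrite !(mulr0, mul0r).
Defined.

Definition Irep (w : V) : Rp.
Proof.
refine (@Rep k V E s t (fun u => #|Iset w u|) (Iarr w) _ _).
- move=> c u u' H; apply/matrixP=> i j; rewrite !mxE.
  case: eqP => Ei; last by rewrite mul0r.
  case: eqP => Ej; last by rewrite mulr0.
  move: (enum_valP i) (enum_valP j); rewrite Ei Ej !inI => /andP[/eqP e1 /eqP e2] /eqP eu.
  by move: H; rewrite eu -e2 -e1 eqxx.
- move=> a b u v w0; apply/matrixP=> i j; rewrite !mxE big1 // => l _; rewrite !mxE.
  by case: (enum_val l) => [c|] /=; rewrite !(mulr0, mul0r).
Defined.

End Quiv.

Section Proj.
Variables (k : fieldType) (V E : finType) (s t : E -> V).
Notation Rp := (rep k s t).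

Lemma fold_row n p (r : 'rV[k]_n) (B : 'M[k]_(n, p)) j :
  \sum_l r 0 l * B l j = (r *m B) 0 j.
Proof. by rewrite mxE. Qed.

Lemma Prep_proj x : projective (Prep k s t x).
Proof.
move=> M N g f Hg.
pose top u : 'rV_(rdim N u) :=
  \row_j \sum_(l : 'I_#|Pset s t x u|) (enum_val l == None)%:R * hmap f u l j.
pose m u := top u *m pinvmx (hmap g u).
have mg u : m u *m hmap g u = top u by apply: mulmxKpV; apply: submx_full.
clearbody m.
pose hrow u (o : option E) : 'rV_(rdim M u) :=
  match o with None => m u | Some a => m (s a) *m rarr M a (s a) u end.
pose hm u : 'M_(#|Pset s t x u|, rdim M u) := \matrix_(i, j) hrow u (enum_val i) 0 j.
have hmrow u i : row i (hm u) = hrow u (enum_val i).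
  by apply/rowP => j; rewrite !mxE.
have hc : forall c u u', rarr (Prep k s t x) c u u' *m hm u' = hm u *m rarr M c u u'.
  move=> c u u'; apply/row_matrixP => i; rewrite !row_mul hmrow.
  case Ei: (enum_val i) => [a|] /=.
    rewrite -mulmxA (rarr_rel M) mulmx0.
    by apply/rowP => j; rewrite !mxE big1 // => l _; rewrite !mxE Ei /= !mul0r.
  apply/rowP => j; rewrite [LHS]mxE.
  under eq_bigr => l _ do rewrite !mxE Ei /= mul1r.
  move: (enum_valP i); rewrite Ei inP => /eqP eu; subst u.
  have [Hin|Hout] := boolP (Some c \in Pset s t x u').
    rewrite (sum_ev_in _ (enum_rankK_in Hin Hin)) enum_rankK_in //=.
    by move: Hin; rewrite inP => /andP[/eqP -> _].
  rewrite sum_ev_out // (rarr_supp M) ?mulmx0 ?mxE //.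
  by apply/negP => /eqP [e1 e2]; move: Hout; rewrite inP -e1 -e2 !eqxx.
exists (@Defs.Hom k V E s t (Prep k s t x) M hm hc) => u /=.
rewrite /hcompE /=; apply/row_matrixP => i; rewrite row_mul hmrow.
case Ei: (enum_val i) => [a|] /=.
  move: (enum_valP i); rewrite Ei inP => /andP[/eqP ea /eqP eb].
  have Hn : (None : option E) \in Pset s t x (s a) by rewrite inP ea.
  have Htop : top (s a) = row (enum_rank_in Hn None) (hmap f (s a)).
    by apply/rowP => j; rewrite !mxE (sum_ev_in _ (enum_rankK_in Hn Hn)).
  rewrite -mulmxA (hcomm g) mulmxA mg Htop -row_mul -(hcomm f) row_mul.
  apply/rowP => j; rewrite !mxE.
  under eq_bigr => l _ do rewrite !mxE enum_rankK_in // eqxx mul1r.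
  by rewrite (sum_ev_in _ Ei).
rewrite mg; apply/rowP => j; rewrite !mxE (sum_ev_in _ Ei) //.
Qed.

End Proj.

Section Inj.
Variables (k : fieldType) (V E : finType) (s t : E -> V).
Notation Rp := (rep k s t).

Lemma col_matrixP' m n (A B : 'M[k]_(m, n)) : (forall j, col j A = col j B) -> A = B.
Proof. by move=> H; apply/matrixP => i j; move/colP: (H j) => /(_ i); rewrite !mxE. Qed.

Lemma col_mul' m n p (A : 'M[k]_(m, n)) (B : 'M[k]_(n, p)) j : col j (A *m B) = A *m col j B.
Proof. by apply/colP => i; rewrite !mxE; apply: eq_bigr => l _; rewrite !mxE. Qed.

Lemma Irep_ext w (A B : Rp) (d : Defs.hom A B) (f : Defs.hom A (Irep k s t w)) :
  (forall u, kermx (hmap d u) *m hmap f u = 0) ->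
  exists g : Defs.hom B (Irep k s t w), forall u, hmap f u = hmap d u *m hmap g u.
Proof.
move=> H.
pose colN u : 'cV[k]_(#|Iset s t w u|) := \col_j (enum_val j == None)%:R.
pose lam u := hmap f u *m colN u.
pose mu u := pinvmx (hmap d u) *m lam u.
have dmu u : hmap d u *m mu u = lam u by apply: solve_ker; rewrite mulmxA H mul0mx.
clearbody mu.
pose gcol u (o : option E) : 'cV_(rdim B u) :=
  match o with None => mu u | Some b => rarr B b u (t b) *m mu (t b) end.
pose gm u : 'M_(rdim B u, #|Iset s t w u|) := \matrix_(r, jj) gcol u (enum_val jj) r 0.
have gmcol u jj : col jj (gm u) = gcol u (enum_val jj) by apply/colP => r; rewrite !mxE.
have hc : forall c u u', rarr B c u u' *m gm u' = gm u *m rarr (Irep k s t w) c u u'.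
  move=> c u u'; apply: col_matrixP' => jj; rewrite !col_mul' gmcol.
  case Ej: (enum_val jj) => [b|] /=.
    rewrite mulmxA (rarr_rel B) mul0mx.
    by apply/colP => r; rewrite !mxE big1 // => l _; rewrite !mxE Ej /= !mulr0.
  move: (enum_valP jj); rewrite Ej inI => /eqP eu'; subst u'.
  apply/colP => r; rewrite [RHS]mxE.
  under eq_bigr => l _ do rewrite !mxE Ej /= mulr1 mulrC.
  have [Hin|Hout] := boolP (Some c \in Iset s t w u).
    rewrite (sum_ev_in _ (enum_rankK_in Hin Hin)) enum_rankK_in //=.
    by move: Hin; rewrite inI => /andP[_ /eqP ->].
  rewrite sum_ev_out // (rarr_supp B) ?mul0mx ?mxE //.
  by apply/negP => /eqP [e1 e2]; move: Hout; rewrite inI e1 e2 !eqxx.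
exists (@Defs.Hom k V E s t B (Irep k s t w) gm hc) => u /=.
apply: col_matrixP' => jj; rewrite col_mul' gmcol.
case Ej: (enum_val jj) => [b|] /=.
  move: (enum_valP jj); rewrite Ej inI => /andP[/eqP ea /eqP eb].
  have Hn : (None : option E) \in Iset s t w (t b) by rewrite inI eb.
  rewrite mulmxA -(hcomm d) -mulmxA dmu /lam mulmxA (hcomm f) -mulmxA.
  have Hd : rarr (Irep k s t w) b u (t b) *m colN (t b) = \col_l (enum_val l == Some b)%:R.
    apply/colP => l; rewrite !mxE.
    under eq_bigr => m _ do rewrite !mxE mulrC.
    by rewrite (sum_ev_in _ (enum_rankK_in Hn Hn)) enum_rankK_in // eqxx mulr1.
  rewrite Hd; apply/colP => r; rewrite !mxE.
  under eq_bigr => l _ do rewrite !mxE mulrC.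
  by rewrite (sum_ev_in _ Ej).
rewrite dmu /lam; apply/colP => r; rewrite !mxE.
under eq_bigr => l _ do rewrite !mxE mulrC.
by rewrite (sum_ev_in _ Ej).
Qed.

End Inj.

Section Split.
Variables (k : fieldType) (V E : finType) (s t : E -> V).
Notation Rp := (rep k s t).
Ltac msimp := repeat (first [rewrite mulmx1 | rewrite mulmx0 | rewrite mul1mx | rewrite mul0mx | rewrite addr0 | rewrite add0r | rewrite subr0]).

Lemma split_ext (X Y : Rp) (F : E -> forall u u' : V, 'M[k]_(rdim X u, rdim Y u'))
  (Fsupp : forall c u u', (u, u') != (s c, t c) -> F c u u' = 0)
  (Frel1 : forall a b u v w, F a u v *m rarr Y b v w = 0)
  (Frel2 : forall a b u v w, rarr X a u v *m F b v w = 0) :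
  Ext_vanish 1 X Y ->
  exists sg : forall u, 'M[k]_(rdim X u, rdim Y u),
    forall c u u', rarr X c u u' *m sg u' = sg u *m rarr Y c u u' + F c u u'.
Proof.
case=> P [d [eps [[Hproj Hsurj Hex0 Hex] Hcoc]]].
pose Ed u := (rdim Y u + rdim X u)%N.
pose Earr c u u' : 'M[k]_(Ed u, Ed u') :=
  block_mx (rarr Y c u u') 0 (F c u u') (rarr X c u u').
have Esupp : forall c u u', (u, u') != (s c, t c) -> Earr c u u' = 0.
  by move=> c u u' H; rewrite /Earr !rarr_supp // Fsupp // block_mx0.
have Erel : forall a b u v w, Earr a u v *m Earr b v w = 0.
  move=> a b u v w; rewrite /Earr mulmx_block !rarr_rel Frel1 Frel2.
  by msimp; rewrite block_mx0.
pose Er := @Rep k V E s t Ed Earr Esupp Erel.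
pose pi u : 'M[k]_(Ed u, rdim Y u) := col_mx 1%:M 0.
pose pE u : 'M[k]_(Ed u, rdim X u) := col_mx 0 1%:M.
pose io u : 'M[k]_(rdim Y u, Ed u) := row_mx 1%:M 0.
pose rh u : 'M[k]_(rdim X u, Ed u) := row_mx 0 1%:M.
have E1 c u u' : Earr c u u' *m pi u' = pi u *m rarr Y c u u' + pE u *m F c u u'.
  rewrite /Earr /pi /pE mul_block_col !mul_col_mx add_col_mx.
  by msimp.
have E2 c u u' : io u *m Earr c u u' = rarr Y c u u' *m io u'.
  rewrite /Earr /io mul_row_block mul_mx_row.
  by msimp.
have E3 u : io u *m pE u = 0 by rewrite /io /pE mul_row_col; msimp.
have E4 u : pi u *m io u + pE u *m rh u = 1%:M.
  rewrite /pi /io /pE /rh !mul_col_row (scalar_mx_block (rdim Y u) (rdim X u)).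
  by rewrite add_block_mx; msimp.
have pEc : forall c u u', Earr c u u' *m pE u' = pE u *m rarr X c u u'.
  move=> c u u'; rewrite /Earr /pE mul_block_col mul_col_mx.
  by msimp.
pose pEh := @Defs.Hom k V E s t Er X pE pEc.
have pEs : surj pEh.
  move=> u; rewrite /= -sub1mx; apply/submxP; exists (rh u).
  by rewrite /rh /pE mul_row_col; msimp.
have [h Hh] := Hproj 0%N Er X pEh eps pEs.
have Hh' u : hmap h u *m pE u = hmap eps u by exact: Hh.
have fc : forall c u u', rarr (P 1%N) c u u' *m (hmap (d 0%N) u' *m hmap h u' *m pi u')
    = (hmap (d 0%N) u *m hmap h u *m pi u) *m rarr Y c u u'.
  move=> c u u'.
  rewrite !mulmxA (hcomm (d 0%N)) -(mulmxA (hmap (d 0%N) u)) (hcomm h) /=.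
  rewrite -!mulmxA E1 !mulmxDr !mulmxA -[_ *m hmap h u *m pE u]mulmxA Hh'.
  by rewrite ((Hex0 u).1) mul0mx addr0.
pose f := @Defs.Hom k V E s t (P 1%N) Y _ fc.
have [g Hg] : exists g : Defs.hom (P 0%N) Y,
    forall v, hmap f v = hcompE (d 0%N) g v.
  apply: Hcoc => v; rewrite /hcompE /= !mulmxA ((Hex 0%N v).1) !mul0mx //.
pose hp u := hmap h u - hmap g u *m io u.
have K1 u : hmap (d 0%N) u *m hp u = 0.
  have Hg' : hmap (d 0%N) u *m hmap g u = hmap (d 0%N) u *m hmap h u *m pi u.
    by rewrite -[RHS]/(hmap f u) Hg.
  have e : hmap (d 0%N) u *m hmap h u *m pi u *m io u = hmap (d 0%N) u *m hmap h u.
    rewrite -[RHS]mulmx1 -(E4 u) mulmxDr !mulmxA -[_ *m hmap h u *m pE u]mulmxA Hh'.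
    by rewrite ((Hex0 u).1) mul0mx addr0.
  by rewrite /hp mulmxBr mulmxA Hg' e subrr.
have K2 u : hp u *m pE u = hmap eps u.
  by rewrite /hp mulmxBl Hh' -mulmxA E3 mulmx0 subr0.
have K3 c u u' : rarr (P 0%N) c u u' *m hp u' = hp u *m Earr c u u'.
  rewrite /hp mulmxBr mulmxBl (hcomm h) /= mulmxA (hcomm g) -!mulmxA E2 //.
pose sg u := pinvmx (hmap eps u) *m (hp u *m pi u).
have K4 u : hmap eps u *m sg u = hp u *m pi u.
  apply: solve_ker; have /submxP [D ->] := (Hex0 u).2.
  by rewrite -mulmxA (mulmxA (hmap (d 0%N) u)) K1 mul0mx mulmx0.
clearbody sg; exists sg => c u u'.
apply: (full_cancel (Hsurj u)).
rewrite mulmxA -(hcomm eps) -mulmxA K4 mulmxA K3 -mulmxA E1 mulmxDr.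
by rewrite mulmxDr !mulmxA K2 K4.
Qed.

End Split.

Section Memb.
Variables (k : fieldType) (V E : finType) (s t : E -> V).
Notation Rp := (rep k s t).

Lemma P_in_C n (C : Rp -> Prop) : n_cluster_tilting n C -> forall x, C (Prep k s t x).
Proof.
case=> _ H1 _ x; apply/H1 => Y _ [//|j] _.
pose P := fun m : nat => if m is 0 then Prep k s t x else zrep k s t.
exists P, (fun j => zhom (P j.+1) (P j)), (idhom (Prep k s t x) : Defs.hom (P 0%N) _).
split.
  split.
  - by case => [|i] /=; [apply: Prep_proj | apply: zrep_proj].
  - by move=> v; rewrite /= -sub1mx submx_refl.
  - move=> v; split; first by rewrite [LHS]flatmx0.
    have /eqP -> : kermx (hmap (idhom (Prep k s t x)) v) == 0.
      by rewrite kermx_eq0 row_free_unit unitmx1.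
    by rewrite sub0mx.
  - by move=> i v; split; [rewrite [LHS]flatmx0 | rewrite [kermx _]flatmx0 sub0mx].
by move=> f _; exists (zhom (P j) Y) => v; rewrite [LHS]flatmx0 [RHS]flatmx0.
Qed.

Lemma I_in_C n (C : Rp -> Prop) : (2 <= n)%N -> n_cluster_tilting n C ->
  forall w, C (Irep k s t w).
Proof.
move=> n2 HC w; have HP := P_in_C HC w.
case: HC => _ H1 H2; apply/H2 => Y HY [//|j] Hj.
have H12 : (0 < 1 < n)%N by rewrite /= n2.
have [P [d [eps [Hres _]]]] := (proj1 (H1 Y) HY) (Prep k s t w) HP 1%N H12.
exists P, d, eps; split=> // f Hf.
case: (Hres) => _ _ _ Hex.
apply: Irep_ext => u; have /submxP [D ->] := (Hex j u).2.
by rewrite -mulmxA; move: (Hf u); rewrite /hcompE => ->; rewrite mulmx0.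
Qed.

End Memb.

Lemma three (T : finType) (A : {set T}) : (2 < #|A|)%N ->
  exists a b c, [/\ a \in A, b \in A & c \in A] /\ [/\ a != b, a != c & b != c].
Proof.
move=> H.
have /set0Pn [a Ha] : A != set0 by rewrite -card_gt0 (ltn_trans _ H).
have H1 : (1 < #|A :\ a|)%N by move: H; rewrite (cardsD1 a A) Ha.
have /set0Pn [b Hb] : A :\ a != set0 by rewrite -card_gt0 (ltn_trans _ H1).
have H2 : (0 < #|A :\ a :\ b|)%N by move: H1; rewrite (cardsD1 b (A :\ a)) Hb.
have /set0Pn [c Hc] : A :\ a :\ b != set0 by rewrite -card_gt0.
move: Hb Hc; rewrite !in_setD1 => /andP[ba bA] /andP[cb /andP[ca cA]].
by exists a, b, c; split; split; rewrite // eq_sym.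
Qed.

Section Final.
Variables (k : fieldType) (V E : finType) (s t : E -> V).
Notation Rp := (rep k s t).

Lemma out_bound n (C : Rp -> Prop) : (2 <= n)%N -> n_cluster_tilting n C ->
  forall v, (outdeg s v <= 2)%N.
Proof.
move=> n2 HC v; rewrite leqNgt; apply/negP => /three [a1 [a2 [a3 [[]]]]].
rewrite !inE => /eqP s1 /eqP s2 /eqP s3 [n12 n13 n23].
pose w := t a1.
pose F c u u' : 'M[k]_(#|Iset s t w u|, #|Pset s t v u'|) :=
  \matrix_(i, j) ((c == a2)%:R * (enum_val i == Some a1)%:R * (enum_val j == Some a2)%:R).
have Fsupp : forall c u u', (u, u') != (s c, t c) -> F c u u' = 0.
  move=> c u u' H; apply/matrixP => i j; rewrite !mxE.
  case: eqP => [ec|]; last by rewrite !mul0r.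
  case: eqP => Ei; last by rewrite mulr0 mul0r.
  case: eqP => Ej; last by rewrite mulr0.
  move: (enum_valP i) (enum_valP j); rewrite Ei Ej inI inP.
  move=> /andP[/eqP e1 _] /andP[_ /eqP e2].
  by move: H; rewrite ec -e1 -e2 s1 s2 eqxx.
have Frel1 : forall a b u v' w', F a u v' *m rarr (Prep k s t v) b v' w' = 0.
  move=> a b u v' w'; apply/matrixP => i j; rewrite !mxE big1 // => l _; rewrite !mxE.
  by case: (enum_val l) => [c|] /=; rewrite !(mulr0, mul0r).
have Frel2 : forall a b u v' w', rarr (Irep k s t w) a u v' *m F b v' w' = 0.
  move=> a b u v' w'; apply/matrixP => i j; rewrite !mxE big1 // => l _; rewrite !mxE.
  by case: (enum_val l) => [c|] /=; rewrite !(mulr0, mul0r).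
have HX := I_in_C n2 HC w.
have HY := P_in_C HC v.
case: (HC) => _ H1 _.
have H12 : (0 < 1 < n)%N by rewrite /= n2.
have HE := (proj1 (H1 _) HX) _ HY 1%N H12.
have [sg Hsg] := @split_ext k V E s t (Irep k s t w) (Prep k s t v) F Fsupp Frel1 Frel2 HE.
have Hi1 : Some a1 \in Iset s t w v by rewrite inI /w s1 !eqxx.
pose i1 := enum_rank_in Hi1 (Some a1).
have Ei1 : enum_val i1 = Some a1 by rewrite enum_rankK_in.
pose al := \sum_l sg v i1 l * (enum_val l == None)%:R.
have key : forall c, s c = v -> c != a1 -> al + (c == a2)%:R = 0.
  move=> c sc nc.
  have Hj : Some c \in Pset s t v (t c) by rewrite inP sc !eqxx.
  pose j := enum_rank_in Hj (Some c).
  have Ej : enum_val j = Some c by rewrite enum_rankK_in.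
  move/matrixP: (Hsg c v (t c)) => /(_ i1 j).
  rewrite [X in X = _ -> _]mxE big1; last first.
    move=> l _; rewrite !mxE Ei1.
    have -> : (Some a1 == Some c) = false by apply/negbTE; rewrite eq_sym.
    by rewrite !mul0r.
  rewrite !mxE Ei1 Ej eqxx !mulr1.
  under eq_bigr => l _ do rewrite !mxE Ej eqxx mulr1.
  have -> : (Some c == Some a2) = (c == a2) by [].
  by case: (c == a2); rewrite ?mulr1 ?mulr0 => /esym.
have n31 : a3 != a1 by rewrite eq_sym.
have n21 : a2 != a1 by rewrite eq_sym.
have := key a3 s3 n31; rewrite eq_sym (negbTE n23) addr0 => al0.
have := key a2 s2 n21; rewrite eqxx al0 add0r => /eqP.
by rewrite oner_eq0.
Qed.

Lemma in_bound n (C : Rp -> Prop) : (2 <= n)%N -> n_cluster_tilting n C ->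
  forall v, (indeg t v <= 2)%N.
Proof.
move=> n2 HC v; rewrite leqNgt; apply/negP => /three [b1 [b2 [b3 [[]]]]].
rewrite !inE => /eqP t1 /eqP t2 /eqP t3 [n12 n13 n23].
pose x := s b1.
pose F c u u' : 'M[k]_(#|Iset s t v u|, #|Pset s t x u'|) :=
  \matrix_(i, j) ((c == b2)%:R * (enum_val i == Some b2)%:R * (enum_val j == Some b1)%:R).
have Fsupp : forall c u u', (u, u') != (s c, t c) -> F c u u' = 0.
  move=> c u u' H; apply/matrixP => i j; rewrite !mxE.
  case: eqP => [ec|]; last by rewrite !mul0r.
  case: eqP => Ei; last by rewrite mulr0 mul0r.
  case: eqP => Ej; last by rewrite mulr0.
  move: (enum_valP i) (enum_valP j); rewrite Ei Ej inI inP.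
  move=> /andP[/eqP e1 _] /andP[_ /eqP e2].
  by move: H; rewrite ec -e1 -e2 t1 t2 eqxx.
have Frel1 : forall a b u v' w', F a u v' *m rarr (Prep k s t x) b v' w' = 0.
  move=> a b u v' w'; apply/matrixP => i j; rewrite !mxE big1 // => l _; rewrite !mxE.
  by case: (enum_val l) => [c|] /=; rewrite !(mulr0, mul0r).
have Frel2 : forall a b u v' w', rarr (Irep k s t v) a u v' *m F b v' w' = 0.
  move=> a b u v' w'; apply/matrixP => i j; rewrite !mxE big1 // => l _; rewrite !mxE.
  by case: (enum_val l) => [c|] /=; rewrite !(mulr0, mul0r).
have HX := I_in_C n2 HC v.
have HY := P_in_C HC x.
case: (HC) => _ H1 _.
have H12 : (0 < 1 < n)%N by rewrite /= n2.
have HE := (proj1 (H1 _) HX) _ HY 1%N H12.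
have [sg Hsg] := @split_ext k V E s t (Irep k s t v) (Prep k s t x) F Fsupp Frel1 Frel2 HE.
have Hj1 : Some b1 \in Pset s t x v by rewrite inP /x t1 !eqxx.
pose j1 := enum_rank_in Hj1 (Some b1).
have Ej1 : enum_val j1 = Some b1 by rewrite enum_rankK_in.
pose be := \sum_l (enum_val l == None)%:R * sg v l j1.
have key : forall c, t c = v -> c != b1 -> be = (c == b2)%:R.
  move=> c tc nc.
  have Hi : Some c \in Iset s t v (s c) by rewrite inI tc !eqxx.
  pose i := enum_rank_in Hi (Some c).
  have Ei : enum_val i = Some c by rewrite enum_rankK_in.
  move/matrixP: (Hsg c (s c) v) => /(_ i j1).
  rewrite !mxE Ei Ej1 eqxx mulr1.
  have -> : (Some c == Some b2) = (c == b2) by [].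
  have nc' : (Some b1 == Some c) = false by apply/negbTE; rewrite eq_sym.
  rewrite [X in _ = X + _ -> _]big1; last first.
    by move=> l _; rewrite /= /Parr mxE Ej1 nc' !mulr0.
  under eq_bigr => l _ do rewrite /= /Iarr mxE Ei eqxx mul1r.
  by case: (c == b2); rewrite ?mulr1 ?mulr0 add0r.
have n31 : b3 != b1 by rewrite eq_sym.
have n21 : b2 != b1 by rewrite eq_sym.
have := key b3 t3 n31; rewrite eq_sym (negbTE n23) => be0.
have := key b2 t2 n21; rewrite eqxx be0 => /eqP.
by rewrite eq_sym oner_eq0.
Qed.

End Final.

Theorem lemma2p1 (k : fieldType) (V E : finType) (s t : E -> V) (n : nat)
  (C : rep k s t -> Prop) :
  quiver_connected s t -> (2 <= n)%N -> n_cluster_tilting n C ->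
  forall v : V, (indeg t v <= 2)%N /\ (outdeg s v <= 2)%N.
Proof.
move=> _ n2 HC v; split; [exact: (in_bound n2 HC v) | exact: (out_bound n2 HC v)].
Qed.
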